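(* Let $q$ be a prime power, $e\ge 2$, $r$ a positive integer, $a\in\mathbb{F}_{q^e}$ with $a\neq 0$, $f(x)=x^r(x^{q-1}+a)\in\mathbb{F}_{q^e}[x]$, and $\ell=q^{e-1}+\cdots+q+1$. Then $f(x)$ permutes $\mathbb{F}_{q^e}$ and is the composition of a linearized binomial and a monomial if and only if $(-a)^{\ell}\neq 1$ and $r\equiv s\ell+\sum_{i=0}^{k-1}q^{hi}\pmod{q^e-1}$, where $h$ is a positive integer with $\gcd(h,e)=1$, $k$ is a positive integer whose reduction modulo $e$ is the inverse of $h$ modulo $e$, $s$ is a positive integer, and $\gcd(r,q-1)=1$.
   Context: A polynomial permutes $\mathbb{F}_{q^e}$ if it induces a bijection of $\mathbb{F}_{q^e}$. ''$f$ is the composition of a linearized binomial and a monomial'' means $f(x)\equiv L(x^n)\pmod{x^{q^e}-x}$ for some monomial $x^n$ and some linearized binomial $L(x)=bx^{q^m}+cx^{q^{m'}}$ with coefficients in $\mathbb{F}_{q^e}$. *)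

(* Defs.v *)
From HB Require Import structures.
From mathcomp Require Import all_boot all_order all_algebra all_field.
Set Implicit Arguments. Unset Strict Implicit. Unset Printing Implicit Defensive.
Import GRing.Theory.
Local Open Scope ring_scope.

Definition prime_power (q : nat) : Prop :=
  exists p n : nat, prime p /\ (0 < n)%N /\ q = (p ^ n)%N.

Definition fpoly (F : finFieldType) (q r : nat) (a : F) : {poly F} :=
  'X^r * ('X^(q.-1) + a%:P).

Definition permutes (F : finFieldType) (p : {poly F}) : Prop :=
  bijective (fun x : F => p.[x]).

Definition lin_binomial (F : finFieldType) (q m m' : nat) (b c : F) : {poly F} :=
  b *: 'X^(q ^ m) + c *: 'X^(q ^ m').

Definition lin_binom_comp_monomial (F : finFieldType) (q e : nat) (f : {poly F}) : Prop :=
  exists (n m m' : nat) (b c : F),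
    f %% ('X^(q ^ e) - 'X) = (lin_binomial q m m' b c \Po 'X^n) %% ('X^(q ^ e) - 'X).

(* Main.v *)
Require Import Defs.
From HB Require Import structures.
From mathcomp Require Import all_boot all_order all_algebra all_field.
From mathcomp Require Import zify ring.
Import GRing.Theory.
Lemma geo x k : 0 < x -> (x - 1) * \sum_(i < k) x ^ i = x ^ k - 1.
Proof.
move=> x0; elim: k => [|k IH]; first by rewrite big_ord0 muln0 expn0.
rewrite big_ord_recr /= mulnDr IH expnS.
have : 0 < x ^ k by rewrite expn_gt0 x0.
have : x ^ k <= x * x ^ k by rewrite leq_pmull.
rewrite mulnBl mul1n; lia.
Qed.

Lemma dvd_sub1 x j d : 0 < x -> d %| j -> x ^ d - 1 %| x ^ j - 1.
Proof.
move=> x0 /divnK <-; rewrite mulnC expnM -(@geo (x ^ d) (j %/ d)) ?dvdn_mulr //.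
by rewrite expn_gt0 x0.
Qed.

Section NT.
Variables q e : nat.
Hypotheses (q2 : 1 < q) (e2 : 1 < e).
Let N := q ^ e - 1.
Let l := \sum_(i < e) q ^ i.

Lemma Nl : (q - 1) * l = N.
Proof. by rewrite geo // ltnW. Qed.

Lemma qeN : q ^ e = N.+1.
Proof. rewrite /N; have : 0 < q ^ e by rewrite expn_gt0 ltnW. lia. Qed.

Lemma qlt : q < q ^ e.
Proof. by rewrite -{1}(expn1 q) ltn_exp2l. Qed.

Lemma N_gt1 : 1 < N.
Proof. have := qlt; rewrite /N; lia. Qed.

Lemma l_gt1 : 1 < l.
Proof.
have h1 := Nl; have h2 := qlt.
have : (q - 1) * 1 < (q - 1) * l by rewrite muln1 h1 /N; lia.
by rewrite ltn_pmul2l ?subn_gt0.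
Qed.

Lemma qpow_mod j : q ^ j = q ^ (j %% e) %[mod N].
Proof.
rewrite {1}(divn_eq j e) expnD (mulnC (j %/ e)) expnM -modnMml -modnXm qeN.
by rewrite -addn1 modnDl (modn_small (N_gt1)) exp1n modnMml mul1n.
Qed.

Lemma coprime_qN : coprime q N.
Proof.
apply: modn_coprime; first by rewrite ltnW.
exists (q ^ e.-1); rewrite -expnS prednK ?(ltnW e2) // qeN -addn1 modnDl.
by rewrite modn_small // N_gt1.
Qed.

Lemma cancel_q1 x y : (q - 1) * x = (q - 1) * y %[mod N] -> x = y %[mod l].
Proof.
rewrite -Nl -!muln_modr => /eqP; rewrite eqn_pmul2l ?subn_gt0 //; by move/eqP.
Qed.

Lemma key_P h r : r * q ^ h = r + (q - 1) %[mod N] ->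
  r * (\sum_(i < h) q ^ i) = 1 %[mod l].
Proof.
move=> H; apply: cancel_q1.
have Q : q ^ h = (q - 1) * (\sum_(i < h) q ^ i) + 1.
  rewrite geo ?(ltnW q2) //; have : 0 < q ^ h by rewrite expn_gt0 ltnW. lia.
move: H; rewrite Q mulnDr muln1 mulnCA addnC => /eqP.
by rewrite eqn_modDl muln1 => /eqP.
Qed.

Lemma hk_q h k : (k * h = 1 %[mod e]) -> q ^ (h * k) = q %[mod N].
Proof. by move=> H; rewrite qpow_mod (mulnC h k) H (modn_small e2) expn1. Qed.

Lemma S_P h k : (k * h = 1 %[mod e]) ->
  (\sum_(i < k) q ^ (h * i)) * (\sum_(i < h) q ^ i) = 1 %[mod l].
Proof.
move=> H; apply: cancel_q1.
rewrite mulnCA geo ?(ltnW q2) // mulnC.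
have -> : \sum_(i < k) q ^ (h * i) = \sum_(i < k) (q ^ h) ^ i.
  by apply: eq_bigr => i _; rewrite expnM.
rewrite geo ?expn_gt0 ?(ltnW q2) // -expnM muln1.
have := @hk_q h k H; have : 0 < q ^ (h * k) by rewrite expn_gt0 ltnW.
move=> p0 /eqP Hm; apply/eqP.
rewrite -(eqn_modDr 1) subnK // subnK //; by rewrite ltnW.
Qed.


Lemma Sgeo h k : (\sum_(i < k) q ^ (h * i)) * (q ^ h - 1) = q ^ (h * k) - 1.
Proof.
have -> : \sum_(i < k) q ^ (h * i) = \sum_(i < k) (q ^ h) ^ i.
  by apply: eq_bigr => i _; rewrite expnM.
by rewrite mulnC geo ?expn_gt0 ?(ltnW q2) // -expnM.
Qed.

Lemma hk1 h k : (k * h = 1 %[mod e]) -> q ^ (h * k) - 1 = q - 1 %[mod N].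
Proof.
move=> H; have := @hk_q h k H; have : 0 < q ^ (h * k) by rewrite expn_gt0 ltnW.
move=> p0 /eqP Hm; apply/eqP.
rewrite -(eqn_modDr 1) subnK // subnK //; by rewrite ltnW.
Qed.

Lemma t_coprime t r : r * q ^ t = r + (q - 1) %[mod N] -> coprime t e.
Proof.
move=> K; rewrite /coprime.
have d0 : 0 < gcdn t e by rewrite gcdn_gt0 (ltnW e2) orbT.
have [//|d1] := eqVneq (gcdn t e) 1.
have dg : 1 < gcdn t e by rewrite ltn_neqAle eq_sym d1 d0.
set d := gcdn t e in d0 d1 dg.
have hDt : q ^ d - 1 %| q ^ t - 1 by apply: dvd_sub1; rewrite ?(ltnW q2) ?dvdn_gcdl.
have hDN : q ^ d - 1 %| N by apply: dvd_sub1; rewrite ?(ltnW q2) ?dvdn_gcdr.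
have K2 : r * q ^ t = r + (q - 1) %[mod q ^ d - 1].
  by rewrite -(modn_dvdm _ hDN) K (modn_dvdm _ hDN).
have K3 : r * q ^ t = r + 0 %[mod q ^ d - 1].
  have qt0 : 0 < q ^ t by rewrite expn_gt0 ltnW.
  case/dvdnP: hDt => c Hc.
  have -> : r * q ^ t = r * c * (q ^ d - 1) + r.
    by rewrite -mulnA -Hc mulnBr muln1 subnK // leq_pmulr.
  by rewrite modnMDl addn0.
move: K2; rewrite K3 => /eqP; rewrite eqn_modDl mod0n => Hd.
have : q ^ 1 < q ^ d by rewrite ltn_exp2l.
rewrite expn1 => qd.
have : q ^ d - 1 <= q - 1 by apply: dvdn_leq; rewrite ?subn_gt0 // /dvdn eq_sym Hd.
by rewrite leqNgt ltn_sub2r // (ltn_trans q2 qd).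
Qed.


Lemma nt_forward n m1 m2 r : coprime n N ->
  n * q ^ m1 = r + (q - 1) %[mod N] -> n * q ^ m2 = r %[mod N] ->
  (exists h k s : nat,
        [/\ (0 < h) /\ coprime h e, (0 < k) /\ (k * h = 1 %[mod e]), (0 < s) &
            (r = s * l + \sum_(i < k) q ^ (h * i) %[mod N])]) /\ coprime r (q - 1).
Proof.
move=> cn H1 H2.
set t := (m1 + (e - m2 %% e)) %% e.
have E : (m2 + t) %% e = m1 %% e.
  rewrite /t modnDmr.
  have F1 := divn_eq m2 e; have F2 : m2 %% e < e by rewrite ltn_mod ltnW.
  have -> : m2 + (m1 + (e - m2 %% e)) = (m2 %/ e).+1 * e + m1.
    move: F1 F2; set A := m2 %/ e; set B := m2 %% e; clearbody A B.
    move=> F1 F2; rewrite mulSn; move: F1 F2; clear; lia.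
  by rewrite modnMDl.
have K : r * q ^ t = r + (q - 1) %[mod N].
  rewrite -modnMml -H2 modnMml -mulnA -expnD -modnMmr qpow_mod E -qpow_mod.
  by rewrite modnMmr.
have tc := @t_coprime t r K.
have t0 : 0 < t.
  case: (posnP t) tc => // ->; rewrite /coprime gcd0n => /eqP e1.
  by move: e2; rewrite e1.
have [km kn Hk _] := egcdnP e t0.
move: Hk; rewrite (eqP tc) => Hk.
have k0 : 0 < km by case: (posnP km) Hk => // ->; rewrite mul0n addn1.
have HK : km * t = 1 %[mod e] by rewrite Hk modnMDl.
set S := \sum_(i < km) q ^ (t * i).
have RP := @key_P _ r K.
have SP := @S_P t km HK.
have RS : r = S %[mod l].
  rewrite -[r in LHS]muln1 -modnMmr -SP modnMmr mulnCA mulnC -modnMml RP.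
  by rewrite modnMml mul1n.
have cr : coprime r N.
  have : coprime (n * q ^ m2) N by rewrite coprimeMl cn coprimeXl // coprime_qN.
  by move=> C; rewrite /coprime -gcdn_modl -H2 gcdn_modl.
split; last by apply: coprime_dvdr cr; rewrite -Nl dvdn_mulr.
set r' := r + S * N.
have Sr : S <= r'.
  have Hs : S <= S * N by rewrite leq_pmulr // ltnW // N_gt1.
  exact: leq_trans Hs (leq_addl _ _).
have : l %| r' - S.
  by rewrite -eqn_mod_dvd // /r' -Nl mulnA addnC modnMDl RS.
move/divnK => Hj; set j := (r' - S) %/ l in Hj.
exists t, km, (j + (q - 1)); split => //; first by rewrite addn_gt0 subn_gt0 q2 orbT.
have -> : (j + (q - 1)) * l + S = (S.+1) * N + r.
  rewrite mulnDl Hj Nl mulSn addnAC subnK // /r'.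
  by rewrite -addnA addnC (addnC N).
by rewrite modnMDl.
Qed.


Lemma nt_backward r h k s : 0 < r -> (k * h = 1 %[mod e]) ->
  r = s * l + \sum_(i < k) q ^ (h * i) %[mod N] -> coprime r (q - 1) ->
  r * q ^ h = r + (q - 1) %[mod N] /\ coprime r N.
Proof.
move=> r0 HK Hr Hc.
set S := \sum_(i < k) q ^ (h * i) in Hr.
have K : r * q ^ h = r + (q - 1) %[mod N].
  rewrite -modnMml Hr modnMml -modnDml Hr modnDml.
  have SG := Sgeo h k; rewrite -/S in SG.
  have Q : q ^ h - 1 = (q - 1) * (\sum_(i < h) q ^ i) by rewrite geo ?(ltnW q2).
  have qh : 0 < q ^ h by rewrite expn_gt0 ltnW.
  have qhk : 0 < q ^ (h * k) by rewrite expn_gt0 ltnW.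
  set P := \sum_(i < h) q ^ i in Q.
  have NL := Nl.
  have -> : (s * l + S) * q ^ h = (s * P) * N + ((s * l + S) + (q ^ (h * k) - 1)).
    rewrite -SG Q -NL.
    have -> : q ^ h = (q - 1) * P + 1 by rewrite -Q subnK.
    ring.
  by rewrite modnMDl -modnDmr hk1 // modnDmr.
split => //.
have RP := @key_P _ r K.
have cl : coprime r l.
  apply: modn_coprime => //; exists (\sum_(i < h) q ^ i).
  by rewrite RP modn_small // l_gt1.
by rewrite -Nl coprimeMr Hc cl.
Qed.

End NT.

Local Open Scope ring_scope.

Section FF.
Variable F : finFieldType.
Variables q e : nat.
Hypotheses (q2 : (1 < q)%N) (e2 : (1 < e)%N) (cardF : #|F| = (q ^ e)%N).
Let N := (q ^ e - 1)%N.

Lemma xN (x : F) : x != 0 -> x ^+ N = 1.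
Proof.
move=> x0; have H := expf_card x; rewrite cardF qeN // exprS in H.
by apply: (mulfI x0); rewrite mulr1.
Qed.

Lemma F_pow (x : F) u v : (0 < u)%N -> (0 < v)%N -> (u = v %[mod N])%N -> x ^+ u = x ^+ v.
Proof.
move=> u0 v0 H; have [->|x0] := eqVneq x 0; first by rewrite !expr0n -(prednK u0) -(prednK v0).
rewrite (divn_eq u N) (divn_eq v N) H !exprD !(mulnC _ N) !exprM xN //.
by rewrite !expr1n !mul1r.
Qed.

Lemma prim_ex : exists g : F, N.-primitive_root g.
Proof.
have N0 : (0 < N)%N by rewrite ltnW // N_gt1.
have : has N.-primitive_root (enum (predC1 (0 : F))).
  apply: (cyclic.has_prim_root N0).
- apply/allP => x; rewrite mem_enum /= => x0; rewrite unity_rootE xN //.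
- exact: enum_uniq.
- by rewrite -cardE cardC1 cardF qeN.
by case/hasP => g _ Hg; exists g.
Qed.


Let M : {poly F} := 'X^(q ^ e) - 'X.

Lemma M_eval (x : F) : M.[x] = 0.
Proof. by rewrite /M hornerD hornerN hornerXn hornerX -cardF expf_card subrr. Qed.

Lemma mod_eval (p : {poly F}) x : (p %% M).[x] = p.[x].
Proof. by rewrite {2}(divp_eq p M) hornerD hornerM M_eval mulr0 add0r. Qed.

Lemma size_M : size M = (q ^ e).+1.
Proof.
rewrite /M size_polyDl ?size_polyXn // size_polyN size_polyX ltnS.
change (2 <= q ^ e)%N; have := @qlt q e q2 e2; lia.
Qed.

Lemma Xshift w : (0 < w)%N -> 'X^(w + N) %% M = 'X^w %% M.
Proof.
move=> w0.
have -> : 'X^(w + N) = 'X^(w.-1) * M + 'X^w.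
  rewrite /M mulrBr -!exprD -exprSr (prednK w0) addrNK; congr (GRing.exp _ _).
  rewrite qeN //; lia.
by rewrite modpD modp_mull add0r.
Qed.

Lemma Xmod u v : (0 < u)%N -> (0 < v)%N -> (u = v %[mod N])%N -> 'X^u %% M = 'X^v %% M.
Proof.
wlog uv : u v / (u <= v)%N.
  move=> W u0 v0 H; case: (leqP u v) => [uv|/ltnW vu]; first exact: W.
  by symmetry; apply: W.
move=> u0 v0 /eqP; rewrite eq_sym eqn_mod_dvd // => /divnK Hc.
have -> : v = (u + (v - u) %/ N * N)%N by rewrite Hc; lia.
elim: ((v - u) %/ N)%N => [|c IH]; first by rewrite mul0n addn0.
by rewrite mulSn addnCA addnC Xshift ?IH // addn_gt0 u0.
Qed.

Definition red u := if u == 0%N then 0%N else ((u.-1 %% N).+1)%N.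

Lemma Xred u : 'X^u %% M = 'X^(red u) :> {poly F}.
Proof.
rewrite /red; case: eqP => [->|/eqP u0].
  by rewrite modp_small // size_polyXn size_M ltnS expn_gt0 ltnW.
rewrite -lt0n in u0.
have Hm : (u = (u.-1 %% N).+1 %[mod N])%N.
  by rewrite -addn1 -modnDml modn_mod modnDml addn1 prednK.
rewrite (@Xmod u ((u.-1 %% N).+1) u0 (ltn0Sn _) Hm).
apply: modp_small; rewrite size_polyXn size_M (@qeN q e q2 e2) !ltnS.
by rewrite ltn_mod ltnW // (@N_gt1 q e q2 e2).
Qed.

Lemma red_mod u : (0 < u)%N -> (red u = u %[mod N])%N.
Proof.
move=> u0; rewrite /red eqn0Ngt u0.
by rewrite -addn1 modnDml addn1 prednK.
Qed.

Lemma red_pos u : (0 < u)%N -> (0 < red u)%N.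
Proof. by move=> u0; rewrite /red eqn0Ngt u0. Qed.

Lemma fpolyE r (a : F) : fpoly q r a = 'X^(r + q.-1) + a *: 'X^r.
Proof. by rewrite /fpoly mulrDr exprD (mulrC _ a%:P) mul_polyC. Qed.

Lemma linE m m' (b c : F) n : lin_binomial q m m' b c \Po 'X^n = b *: 'X^(n * q ^ m) + c *: 'X^(n * q ^ m').
Proof. by rewrite /lin_binomial comp_polyD !comp_polyZ !comp_Xn_poly -!exprM. Qed.

Lemma f_eval r (a x : F) : (fpoly q r a).[x] = x ^+ r * (x ^+ q.-1 + a).
Proof. by rewrite /fpoly hornerM hornerD hornerC !hornerXn. Qed.

Lemma coprime_of_inj n : injective (fun x : F => x ^+ n) -> coprime n N.
Proof.
move=> inj; have [g Hg] := prim_ex.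
have N0 : (0 < N)%N by rewrite ltnW // N_gt1.
rewrite /coprime; have [//|d1] := eqVneq (gcdn n N) 1.
have d0 : (0 < gcdn n N)%N by rewrite gcdn_gt0 N0 orbT.
have dg : (1 < gcdn n N)%N by lia.
set d := gcdn n N in d0 d1 dg.
have dN : (d %| N)%N by rewrite dvdn_gcdr.
have dn : (d %| n)%N by rewrite dvdn_gcdl.
have Nd0 : (0 < N %/ d)%N by rewrite divn_gt0 // dvdn_leq.
have : (g ^+ (N %/ d)) ^+ n = 1 ^+ n.
  rewrite -exprM expr1n; apply/eqP; rewrite -(prim_order_dvd Hg).
  by rewrite -(divnK dn) mulnCA divnK // dvdn_mull.
move/inj/eqP; rewrite -(prim_order_dvd Hg) => /(dvdn_leq Nd0).
have : (N %/ d < N)%N by rewrite ltn_Pdiv.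
lia.
Qed.

Lemma negal r (a : F) : (0 < r)%N -> a != 0 -> permutes (fpoly q r a) ->
  (- a) ^+ (\sum_(i < e) q ^ i) != 1.
Proof.
move=> r0 a0 [finv fK _]; apply/eqP => Hl.
set l := (\sum_(i < e) q ^ i)%N in Hl.
have [g Hg] := prim_ex.
have NL : ((q - 1) * l)%N = N by apply: Nl.
have HN : (- a) ^+ N = 1 by rewrite -NL mulnC exprM Hl expr1n.
have [[i _] /= Hi] := prim_rootP Hg HN.
have : (N %| i * l)%N by rewrite (prim_order_dvd Hg) exprM -Hi Hl.
have l0 : (0 < l)%N by rewrite ltnW // l_gt1.
rewrite -NL dvdn_pmul2r // => /dvdnP [j Hj].
set z := g ^+ j.
have Hz : z ^+ q.-1 = - a by rewrite Hi Hj -exprM -subn1.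
have z0 : z != 0.
  apply/eqP => z0; move: Hz; rewrite z0 expr0n.
  have -> : (q.-1 == 0%N) = false by lia.
  by move/eqP; rewrite eq_sym oppr_eq0 (negbTE a0).
have : (fpoly q r a).[z] = (fpoly q r a).[0].
  by rewrite !f_eval Hz addNr mulr0 expr0n eqn0Ngt r0 mul0r.
by move/(can_inj fK)/eqP; rewrite (negbTE z0).
Qed.

Lemma red_inj x y : (0 < x)%N -> (0 < y)%N -> red x = red y -> (x = y %[mod N])%N.
Proof. by move=> x0 y0 E; rewrite -(@red_mod x x0) -(@red_mod y y0) E. Qed.

Lemma forward_cong r (a : F) : (0 < r)%N -> a != 0 -> permutes (fpoly q r a) ->
  lin_binom_comp_monomial q e (fpoly q r a) ->
  exists n m1 m2, [/\ coprime n N, (n * q ^ m1 = r + (q - 1) %[mod N])%N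
                                 & (n * q ^ m2 = r %[mod N])%N].
Proof.
move=> r0 a0 [finv fK _] [n [m [m' [b [c Heq]]]]].
have inj : injective (fun x : F => x ^+ n).
  move=> x y Hxy.
  apply: (can_inj fK); rewrite /= -!(mod_eval (fpoly q r a)) Heq !mod_eval.
  by rewrite !horner_comp !hornerXn Hxy.
have cn := @coprime_of_inj n inj.
have q1 : (0 < q.-1)%N by lia.
have rq0 : (0 < r + q.-1)%N by rewrite addn_gt0 r0.
have R10 : red (r + q.-1) != red r.
  apply/eqP => /(@red_inj _ _ rq0 r0)/eqP; rewrite -{2}[r]addn0 eqn_modDl mod0n => /eqP H.
  have : (N %| q.-1)%N by rewrite /dvdn H.
  move/dvdn_leq => /(_ q1); have := @qlt q e q2 e2; rewrite /N; lia.
move: Heq; rewrite fpolyE linE !modpD !modpZl !Xred.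
set R1 := red (r + q.-1); set R0 := red r.
set E1 := red (n * q ^ m)%N; set E2 := red (n * q ^ m')%N => Heq.
have C1 := congr1 (fun p : {poly F} => p`_R1) Heq.
have C0 := congr1 (fun p : {poly F} => p`_R0) Heq.
rewrite /= !coefD !coefZ !coefXn eqxx (negbTE R10) mulr0 addr0 in C1.
rewrite /= !coefD !coefZ !coefXn eqxx eq_sym (negbTE R10) mulr1 add0r in C0.
have h1 : (R1 == E1) || (R1 == E2).
  apply/negPn/negP; rewrite negb_or => /andP[/negbTE A /negbTE B].
  by move: C1; rewrite A B !mulr0 addr0 => /eqP; rewrite oner_eq0.
have h0 : (R0 == E1) || (R0 == E2).
  apply/negPn/negP; rewrite negb_or => /andP[/negbTE A /negbTE B].
  by move: C0; rewrite A B !mulr0 addr0 => /eqP; rewrite (negbTE a0).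
have R1p : (0 < R1)%N by apply: red_pos.
have R0p : (0 < R0)%N by apply: red_pos.
have n0 : (0 < n)%N.
  case: (posnP n) h1 => // n0; rewrite /E1 /E2 n0 !mul0n /red eqxx orbb => /eqP H.
  by rewrite H in R1p.
have p1 : (0 < n * q ^ m)%N by rewrite muln_gt0 n0 expn_gt0 ltnW.
have p2 : (0 < n * q ^ m')%N by rewrite muln_gt0 n0 expn_gt0 ltnW.
rewrite subn1.
move: h1 h0 => /orP[/eqP A|/eqP A] /orP[/eqP B|/eqP B].
- by move: R10; rewrite -/R1 -/R0 A B eqxx.
- exists n, m, m'; split => //.
    by symmetry; apply: red_inj => //; rewrite -A.
  by symmetry; apply: red_inj => //; rewrite -B.
- exists n, m', m; split => //.
    by symmetry; apply: red_inj => //; rewrite -A.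
  by symmetry; apply: red_inj => //; rewrite -B.
- by move: R10; rewrite -/R1 -/R0 A B eqxx.
Qed.

Lemma backward r h (a : F) : prime_power q -> (0 < r)%N ->
  (r * q ^ h = r + (q - 1) %[mod N])%N -> coprime r N ->
  (- a) ^+ (\sum_(i < e) q ^ i) != 1 ->
  permutes (fpoly q r a) /\ lin_binom_comp_monomial q e (fpoly q r a).
Proof.
move=> [p [k [pp [k0 qpk]]]] r0 K cr Hl.
have q0 : (0 < q)%N by lia.
have rq0 : (0 < r * q ^ h)%N by rewrite muln_gt0 r0 expn_gt0 q0.
have rq1 : (0 < r + q.-1)%N by rewrite addn_gt0 r0.
have K' : (r * q ^ h = r + q.-1 %[mod N])%N by rewrite -subn1.
split; last first.
  exists r, h, 0%N, 1, a.
  rewrite fpolyE linE expn0 muln1 scale1r !modpD !modpZl.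
  by rewrite (@Xmod (r * q ^ h) (r + q.-1)).
have pc : p \in [pchar F].
  by apply: (card_finPcharP _ pp); rewrite cardF qpk -expnM.
have pn : [pchar F].-nat (q ^ h)%N by rewrite qpk -expnM pnatX pnatE // pc.
set G := fun y : F => y ^+ (q ^ h) + a * y.
have Gadd y z : G (y + z) = G y + G z.
  by rewrite /G exprDn_pchar // mulrDr addrACA.
have Ginj : injective G.
  move=> y1 y2 H; apply/eqP; rewrite -subr_eq0; apply/negP => /negP z0.
  set z := y1 - y2 in z0.
  have : G z = 0.
    have : G (y2 + z) = G y2 by rewrite /z addrC subrK.
    by rewrite Gadd -{2}[G y2]addr0 => /addrI.
  rewrite /G => /eqP; rewrite addr_eq0 => /eqP Hz.
  have qh : (0 < q ^ h)%N by rewrite expn_gt0 q0.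
  have Hz' : z ^+ (q ^ h - 1) = - a.
    apply: (mulIf z0); move: Hz; rewrite -exprSr subn1 prednK //.
    by move=> ->; rewrite mulNr.
  move: Hl; rewrite -Hz' -exprM.
  have -> : ((q ^ h - 1) * \sum_(i < e) q ^ i)%N = (N * \sum_(i < h) q ^ i)%N.
    by rewrite -geo // mulnAC Nl.
  by rewrite exprM xN // expr1n eqxx.
have [km kn Hk _] := egcdnP N r0.
have Hk1 : (km * r = kn * N + 1)%N by rewrite Hk (eqP cr).
have powinj : injective (fun x : F => x ^+ r).
  move=> x y /= Hxy.
  have E (w : F) : (w ^+ r) ^+ km = w.
    rewrite -exprM (@F_pow w (r * km) 1) ?expr1 //.
      by rewrite muln_gt0 r0 /=; case: (posnP km) Hk1 => // ->; lia.
    by rewrite mulnC Hk1 modnMDl.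
  by rewrite -(E x) Hxy E.
apply: injF_bij => x y /=.
have fE (w : F) : (fpoly q r a).[w] = G (w ^+ r).
  rewrite f_eval /G -exprM mulrDr -exprD mulrC.
  by rewrite (@F_pow w (r * q ^ h) (r + q.-1)).
by rewrite !fE => /Ginj /powinj.
Qed.

End FF.

Theorem theorem1p4 (F : finFieldType) (q e r : nat) (a : F) :
  prime_power q -> (2 <= e)%N -> #|F| = (q ^ e)%N -> (0 < r)%N -> a != 0 ->
  let l := (\sum_(i < e) q ^ i)%N in
  (permutes (fpoly q r a) /\ lin_binom_comp_monomial q e (fpoly q r a)) <->
  [/\ (- a) ^+ l != 1,
      exists h k s : nat,
        [/\ (0 < h)%N /\ coprime h e, (0 < k)%N /\ (k * h = 1 %[mod e])%N, (0 < s)%N &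
            (r = s * l + \sum_(i < k) q ^ (h * i) %[mod q ^ e - 1])%N]
    & coprime r (q - 1)].
Proof.
move=> qp e2 cardF r0 a0 l.
have q2 : (1 < q)%N.
  case: qp => [p [n [pp [n0 ->]]]].
  apply: (leq_trans (prime_gt1 pp)); rewrite -{1}(expn1 p) leq_pexp2l //.
  exact: prime_gt0.
split.
- move=> [perm lin].
  have [n [m1 [m2 [cn H1 H2]]]] := @forward_cong F q e q2 e2 cardF r a r0 a0 perm lin.
  have [ex cop] := @nt_forward q e q2 e2 n m1 m2 r cn H1 H2.
  split => //; exact: (@negal F q e q2 e2 cardF r a r0 a0 perm).
- move=> [Hl [h [k [s [[h0 hc] [k0 hk] s0 Hr]]]] cop].
  have [K cr] := @nt_backward q e q2 e2 r h k s r0 hk Hr cop.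
  exact: (@backward F q e q2 e2 cardF r h a qp r0 K cr Hl).
Qed.
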